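(* Let $k$ be a field, $R$ a unital associative $k$-algebra, and let $\mathsf{P}_f(R)$ be the exact category of finitely generated projective (right) $R$-modules. Let $``R((t))''$ be the object of $\mathsf{Tate}_{\aleph_0}(\mathsf{P}_f(R))$ given by the Ind-Pro diagram $\underset{n}{\mathrm{colim}}\,\underset{m}{\lim}\, t^{-n}R[t]/t^mR[t]$ (equivalently $\coprod_{\mathbb{N}}R\oplus\prod_{\mathbb{N}}R$), and let $E(R):=\operatorname{End}_{\mathsf{Tate}_{\aleph_0}(\mathsf{P}_f(R))}(``R((t))'')$. Then there is a canonical isomorphism of unital associative algebras \[ E(R)\xrightarrow{\ \sim\ }\left\{\varphi\in\operatorname{End}_R(R((t)))\ \middle|\ \begin{array}{l}\text{(1) for every } n\in\mathbb{Z} \text{ there is } n'\in\mathbb{Z} \text{ with } \varphi(t^nR[[t]])\subseteq t^{n'}R[[t]],\text{ and}\\ \text{(2) for every } m\in\mathbb{Z} \text{ there is } m'\in\mathbb{Z} \text{ with } \varphi(t^{m'}R[[t]])\subseteq t^{m}R[[t]]\end{array}\right\}, \] where $R((t))=R[[t]][t^{-1}]$ is the $R$-module of formal Laurent series and the right-hand side is a subalgebra of $\operatorname{End}_R(R((t)))$ under composition. In particular, the Lie algebra $\mathfrak{gl}_{\mathrm{top}}(\infty,R)$ of $E(R)$ is the Lie algebra of this subalgebra of $\operatorname{End}_R(R((t)))$ under the commutator bracket.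
   Context: For an exact category $\mathcal{C}$: $\mathsf{Ind}^a_{\aleph_0}(\mathcal{C})$ denotes the category of Ind-objects represented by diagrams $X_\bullet:I\to\mathcal{C}$ indexed by countable directed posets $I$ whose transition maps are admissible monics, with $\operatorname{Hom}(X_\bullet,Y_\bullet)=\lim_i\operatorname{colim}_j\operatorname{Hom}_{\mathcal{C}}(X_i,Y_j)$; it carries the exact structure whose short exact sequences are those isomorphic to Ind-diagrams of short exact sequences of $\mathcal{C}$. Dually $\mathsf{Pro}^a_{\aleph_0}(\mathcal{C}):=\mathsf{Ind}^a_{\aleph_0}(\mathcal{C}^{op})^{op}$ (Pro-diagrams with admissible epic transition maps). Both embed in $\mathsf{Ind}^a_{\aleph_0}(\mathsf{Pro}^a_{\aleph_0}(\mathcal{C}))$ (as diagrams constant in the other direction). The category $\mathsf{Tate}^{el}_{\aleph_0}(\mathcal{C})$ is the full (extension-closed, hence exact) subcategory of $\mathsf{Ind}^a_{\aleph_0}(\mathsf{Pro}^a_{\aleph_0}(\mathcal{C}))$ consisting of objects $X$ admitting an admissible short exact sequence $L\hookrightarrow X\twoheadrightarrow X/L$ with $L\in\mathsf{Pro}^a_{\aleph_0}(\mathcal{C})$ and $X/L\in\mathsf{Ind}^a_{\aleph_0}(\mathcal{C})$ (such $L$ are called lattices). $\mathsf{Tate}_{\aleph_0}(\mathcal{C})$ is the idempotent completion of $\mathsf{Tate}^{el}_{\aleph_0}(\mathcal{C})$. *)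

(* Defs.v *)
(* Concrete unfolding of End_{Tate}("R((t))") via the
   Ind-Pro Hom formula  Hom = lim colim (lim colim Hom_C). *)
From HB Require Import structures.
From mathcomp Require Import all_boot all_order all_algebra.
Set Implicit Arguments. Unset Strict Implicit. Unset Printing Implicit Defensive.
Import Order.TTheory GRing.Theory Num.Theory.
Local Open Scope ring_scope.

Definition Quot (T : Type) (e : T -> T -> Prop) : Type :=
  {P : T -> Prop | exists x, e x x /\ forall y, P y <-> e x y}.

Section TateLaurent.
Variables (k : fieldType) (R : algType k).

(* Maps between submodules of R^Z (functions int -> R). *)
Definition Fn := (int -> R) -> (int -> R).

(* window of the module t^{-a}R[t]/t^b R[t], i.e. coefficients of t^i,
   -a <= i < b *)
Definition inW (a b : nat) (i : int) : bool := (- (a%:Z) <= i) && (i < b%:Z).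

Definition res (a b : nat) (f : int -> R) : int -> R :=
  fun i => if inW a b i then f i else 0.

(* g encodes a right R-linear map
     t^{-a}R[t]/t^bR[t] --> t^{-c}R[t]/t^dR[t]
   (a morphism of P_f(R)): it only depends on the coefficients in the
   source window, takes values in the target window, and is additive and
   right R-linear. *)
Definition isHomC (a b c d : nat) (g : Fn) : Prop :=
  [/\ forall f f', (forall i, inW a b i -> f i = f' i) -> g f = g f',
      forall f i, ~~ inW c d i -> g f i = 0,
      forall f f', g (fun i => f i + f' i) = (fun i => g f i + g f' i)
    & forall f (r : R), g (fun i => f i * r) = (fun i => g f i * r)].

(* the morphism g composed with the transition maps of the diagrams
   (restriction to new source window, projection/inclusion to the new
   target window) *)
Definition rrf (a' b' c' d' : nat) (g : Fn) : Fn :=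
  fun f => res c' d' (g (res a' b' f)).

(* colim_b Hom_C(M_{a,b}, M_{c,d}) *)
Definition eqB (a c d : nat) (p q : nat * Fn) : Prop :=
  [/\ isHomC a p.1 c d p.2, isHomC a q.1 c d q.2 &
      exists b3, [/\ (p.1 <= b3)%N, (q.1 <= b3)%N &
                     rrf a b3 c d p.2 = rrf a b3 c d q.2]].
Definition ClB (a c d : nat) := Quot (eqB a c d).

(* Hom_Pro(P_a, P_c) = lim_d colim_b Hom_C(M_{a,b}, M_{c,d}),
   where P_a is the Pro-object  m |-> t^{-a}R[t]/t^mR[t] *)
Definition isProHom (a c : nat) (x : forall d, ClB a c d) : Prop :=
  forall d d' (p : nat * Fn), (d <= d')%N -> sval (x d') p ->
    sval (x d) (p.1, rrf a p.1 c d p.2).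

(* colim_c Hom_Pro(P_a, P_c) *)
Definition RawC (a : nat) := {c : nat & forall d, ClB a c d}.
Definition eqC (a : nat) (q1 q2 : RawC a) : Prop :=
  [/\ isProHom (projT2 q1), isProHom (projT2 q2) &
      exists c3, [/\ (projT1 q1 <= c3)%N, (projT1 q2 <= c3)%N &
        forall d p1 p2, sval (projT2 q1 d) p1 -> sval (projT2 q2 d) p2 ->
          eqB a c3 d (p1.1, rrf a p1.1 c3 d p1.2)
                     (p2.1, rrf a p2.1 c3 d p2.2)]].
Definition ClC (a : nat) := Quot (@eqC a).

(* lim_a colim_c Hom_Pro(P_a, P_c) = End_{Ind(Pro(P_f(R)))}("R((t))") *)
Definition isIndHom (e : forall a, ClC a) : Prop :=
  forall a a' (q : RawC a'), (a <= a')%N -> sval (e a') q ->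
    exists q0 : RawC a, [/\ sval (e a) q0, projT1 q0 = projT1 q &
      forall d p p0, sval (projT2 q d) p -> sval (projT2 q0 d) p0 ->
        eqB a (projT1 q) d p0 (p.1, rrf a p.1 (projT1 q) d p.2)].

Definition EndLaurent := {e : forall a, ClC a | isIndHom e}.

(* Algebra structure on EndLaurent (graphs of the operations). *)
Definition IsCompE (e1 e2 e3 : EndLaurent) : Prop :=
  forall a (q2 : RawC a) (q1 : RawC (projT1 q2)) (q3 : RawC a),
    sval (sval e2 a) q2 -> sval (sval e1 (projT1 q2)) q1 ->
    sval (sval e3 a) q3 ->
    exists c3, [/\ (projT1 q1 <= c3)%N, (projT1 q3 <= c3)%N &
      forall d p1 p2 p3, sval (projT2 q1 d) p1 -> sval (projT2 q2 p1.1) p2 ->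
        sval (projT2 q3 d) p3 ->
        eqB a c3 d (p2.1, rrf a p2.1 c3 d (p1.2 \o p2.2))
                   (p3.1, rrf a p3.1 c3 d p3.2)].

Definition IsIdE (e : EndLaurent) : Prop :=
  forall a (q : RawC a), sval (sval e a) q ->
    exists c3, [/\ (a <= c3)%N, (projT1 q <= c3)%N &
      forall d p, sval (projT2 q d) p ->
        eqB a c3 d (d, rrf a d c3 d id) (p.1, rrf a p.1 c3 d p.2)].

Definition IsAddE (e1 e2 e3 : EndLaurent) : Prop :=
  forall a (q1 q2 q3 : RawC a),
    sval (sval e1 a) q1 -> sval (sval e2 a) q2 -> sval (sval e3 a) q3 ->
    exists c3, [/\ (projT1 q1 <= c3)%N, (projT1 q2 <= c3)%N,
                   (projT1 q3 <= c3)%N &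
      forall d p1 p2 p3, sval (projT2 q1 d) p1 -> sval (projT2 q2 d) p2 ->
        sval (projT2 q3 d) p3 ->
        eqB a c3 d (maxn p1.1 p2.1,
                    fun f i => rrf a (maxn p1.1 p2.1) c3 d p1.2 f i
                             + rrf a (maxn p1.1 p2.1) c3 d p2.2 f i)
                   (p3.1, rrf a p3.1 c3 d p3.2)].

Definition IsScaleE (s : k) (e1 e2 : EndLaurent) : Prop :=
  forall a (q1 q2 : RawC a),
    sval (sval e1 a) q1 -> sval (sval e2 a) q2 ->
    exists c3, [/\ (projT1 q1 <= c3)%N, (projT1 q2 <= c3)%N &
      forall d p1 p2, sval (projT2 q1 d) p1 -> sval (projT2 q2 d) p2 ->
        eqB a c3 d (p1.1, fun f i => s *: rrf a p1.1 c3 d p1.2 f i)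
                   (p2.1, rrf a p2.1 c3 d p2.2)].

Definition LS := {f : int -> R | exists N : int, forall i, i < N -> f i = 0}.

Definition tpow (n : int) (f : int -> R) : Prop := forall i, i < n -> f i = 0.

Definition isEndR (phi : LS -> LS) : Prop :=
  (forall f g h : LS, (forall i, sval h i = sval f i + sval g i) ->
     forall i, sval (phi h) i = sval (phi f) i + sval (phi g) i) /\
  (forall (f g : LS) (r : R), (forall i, sval g i = sval f i * r) ->
     forall i, sval (phi g) i = sval (phi f) i * r).

Definition cond1 (phi : LS -> LS) : Prop :=
  forall n : int, exists n' : int, forall f : LS,
    tpow n (sval f) -> tpow n' (sval (phi f)).
Definition cond2 (phi : LS -> LS) : Prop :=
  forall m : int, exists m' : int, forall f : LS,
    tpow m' (sval f) -> tpow m (sval (phi f)).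

Definition EndTop := {phi : LS -> LS | [/\ isEndR phi, cond1 phi & cond2 phi]}.

(* phi is the endomorphism of R((t)) = colim_a lim_b M_{a,b} induced by e:
   on t^{-a}R[[t]] = lim_b M_{a,b}, e is represented by a Pro-morphism
   P_a -> P_c whose level-d component is g, so phi maps t^{-a}R[[t]]
   into t^{-c}R[[t]] and the window-(c,d) part of phi f is g f. *)
Definition Canon (e : EndLaurent) (phi : LS -> LS) : Prop :=
  forall a (q : RawC a), sval (sval e a) q ->
    forall d p, sval (projT2 q d) p ->
      forall f : LS, tpow (- (a%:Z)) (sval f) ->
        tpow (- ((projT1 q)%:Z)) (sval (phi f)) /\
        forall i, inW (projT1 q) d i -> sval (phi f) i = p.2 (sval f) i.

End TateLaurent.

(* Main.v *)
Require Import Defs.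
From HB Require Import structures.
From mathcomp Require Import all_boot all_order all_algebra.
From mathcomp Require Import zify.
From Stdlib Require Import FunctionalExtensionality PropExtensionality ProofIrrelevance ClassicalEpsilon.
Import Order.TTheory GRing.Theory Num.Theory.
Local Open Scope ring_scope.
Set Implicit Arguments. Unset Strict Implicit.

Section Pf.
Variables (k : fieldType) (R : algType k).
Local Notation Fn := (Fn R).
Local Notation LS := (LS R).

Lemma sig_ext (A : Type) (P : A -> Prop) (u v : {x | P x}) :
  sval u = sval v -> u = v.
Proof. case: u v => x px [y py] /= E; subst y; f_equal; apply: proof_irrelevance. Qed.

Lemma LS_ext (f g : LS) : (forall i, sval f i = sval g i) -> f = g.
Proof. move=> H; apply: sig_ext; exact: functional_extensionality. Qed.

Lemma inW_mono a a' b b' i : (a <= a')%N -> (b <= b')%N -> inW a b i -> inW a' b' i.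
Proof. rewrite /inW => ha hb /andP[h1 h2]; apply/andP; split; lia. Qed.

Definition lin (g : Fn) :=
  (forall f f', g (fun i => f i + f' i) = (fun i => g f i + g f' i)) /\
  (forall f (r : R), g (fun i => f i * r) = (fun i => g f i * r)).

Section HomC.
Variables (a b c d : nat) (g : Fn) (H : isHomC a b c d g).
Lemma isH_dep f f' : (forall i, inW a b i -> f i = f' i) -> g f = g f'.
Proof. by case: H => H1 _ _ _; apply: H1. Qed.
Lemma isH_out f i : ~~ inW c d i -> g f i = 0.
Proof. by case: H => _ H2 _ _; apply: H2. Qed.
Lemma isH_lin : lin g.
Proof. by case: H => _ _ H3 H4; split. Qed.
Lemma isH_res b' f : (b <= b')%N -> g (res a b' f) = g f.
Proof. move=> hb; apply: isH_dep => i hi; rewrite /res (inW_mono (leqnn a) hb hi) //. Qed.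
Lemma isH_out2 f i : (i < - (c%:Z)) -> g f i = 0.
Proof. move=> hi; apply: isH_out; rewrite /inW; apply/negP => /andP[h1 h2]; lia. Qed.
Lemma isH_out3 f i : (d%:Z <= i) -> g f i = 0.
Proof. move=> hi; apply: isH_out; rewrite /inW; apply/negP => /andP[h1 h2]; lia. Qed.
Lemma isH_zero i : g (fun _ => 0) i = 0.
Proof.
case: isH_lin => L _; have := congr1 (fun h => h i) (L (fun _ => 0) (fun _ => 0)).
rewrite /= (_ : (fun _ : int => 0 + 0) = (fun _ => 0 : R)); last first.
  by apply: functional_extensionality => j; rewrite addr0.
by move=> E; apply: (addrI (g (fun _ => 0) i)); rewrite addr0 -E.
Qed.
End HomC.

Lemma rrf_same a b c d (g : Fn) b' c' f i : isHomC a b c d g -> (b <= b')%N -> (c <= c')%N ->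
  rrf a b' c' d g f i = g f i.
Proof.
move=> H hb hc; rewrite /rrf /res (isH_res H _ hb); case: ifP => // hw.
by rewrite (isH_out H) //; apply/negP => /(inW_mono hc (leqnn d)); rewrite hw.
Qed.

Lemma res_add a b (f f' : int -> R) : res a b (fun i => f i + f' i) = (fun i => res a b f i + res a b f' i).
Proof. apply: functional_extensionality => i; rewrite /res; case: ifP => //; by rewrite addr0. Qed.
Lemma res_mul a b (f : int -> R) (r : R) : res a b (fun i => f i * r) = (fun i => res a b f i * r).
Proof. apply: functional_extensionality => i; rewrite /res; case: ifP => //; by rewrite mul0r. Qed.

Lemma rrf_hom a b c d (g : Fn) : lin g -> isHomC a b c d (rrf a b c d g).
Proof.
case=> L M; split.
- move=> f f' E; rewrite /rrf; congr (res c d (g _)).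
  by apply: functional_extensionality => i; rewrite /res; case: ifP => // /E.
- by move=> f i hi; rewrite /rrf /res (negbTE hi).
- move=> f f'; rewrite /rrf res_add L; exact: res_add.
- move=> f r; rewrite /rrf res_mul M; exact: res_mul.
Qed.

Lemma eqB_vals a c d (p q : nat * Fn) : eqB a c d p q -> forall f i, p.2 f i = q.2 f i.
Proof.
case=> Hp Hq [b3 [h1 h2 E]] f i.
have := congr1 (fun h => h f i) E => /=.
by rewrite (rrf_same _ _ Hp) // (rrf_same _ _ Hq).
Qed.

Lemma eqB_of a c d (p q : nat * Fn) : isHomC a p.1 c d p.2 -> isHomC a q.1 c d q.2 ->
  (forall f i, p.2 f i = q.2 f i) -> eqB a c d p q.
Proof.
move=> Hp Hq E; split => //; exists (maxn p.1 q.1); split; rewrite ?leq_maxl ?leq_maxr //.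
apply: functional_extensionality => f; apply: functional_extensionality => i.
by rewrite (rrf_same _ _ Hp) ?leq_maxl // (rrf_same _ _ Hq) ?leq_maxr.
Qed.

Section ClBl.
Variables (a c d : nat).
Lemma ClB_hom (X : ClB R a c d) p : sval X p -> isHomC a p.1 c d p.2.
Proof. by case: X => P [x [hx hP]] /= /hP []. Qed.
Lemma ClB_ex (X : ClB R a c d) : exists p, sval X p.
Proof. by case: X => P [x [hx hP]] /=; exists x; apply/hP. Qed.
Lemma ClB_vals (X : ClB R a c d) p p' : sval X p -> sval X p' -> forall f i, p.2 f i = p'.2 f i.
Proof.
case: X => P [x [hx hP]] /= /hP h1 /hP h2 f i.
by rewrite -(eqB_vals h1) (eqB_vals h2).
Qed.
End ClBl.

Section ClCl.
Variable (a : nat).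
Implicit Types (q x y z : RawC R a).

Lemma eqC_vals q1 q2 : Defs.eqC q1 q2 -> forall d p1 p2,
  sval (projT2 q1 d) p1 -> sval (projT2 q2 d) p2 -> forall f i, p1.2 f i = p2.2 f i.
Proof.
case=> P1 P2 [c3 [h1 h2 H]] d p1 p2 m1 m2 f i.
have := eqB_vals (H d p1 p2 m1 m2) f i => /=.
by rewrite (rrf_same _ _ (ClB_hom m1)) // (rrf_same _ _ (ClB_hom m2)).
Qed.

Lemma eqC_of q1 q2 : isProHom (projT2 q1) -> isProHom (projT2 q2) ->
  (forall d p1 p2, sval (projT2 q1 d) p1 -> sval (projT2 q2 d) p2 -> forall f i, p1.2 f i = p2.2 f i) ->
  Defs.eqC q1 q2.
Proof.
move=> P1 P2 E; split => //; exists (maxn (projT1 q1) (projT1 q2)); split; rewrite ?leq_maxl ?leq_maxr //.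
move=> d p1 p2 m1 m2; apply: eqB_of => /=.
- by apply: rrf_hom; apply: isH_lin (ClB_hom m1).
- by apply: rrf_hom; apply: isH_lin (ClB_hom m2).
- move=> f i; rewrite (rrf_same _ _ (ClB_hom m1)) ?leq_maxl //.
  rewrite (rrf_same _ _ (ClB_hom m2)) ?leq_maxr //.
  exact: E m1 m2 f i.
Qed.

Lemma eqC_tr x y z : Defs.eqC x y -> Defs.eqC x z -> Defs.eqC y z.
Proof.
move=> h1 h2; apply: eqC_of; [by case: h1|by case: h2|].
move=> d p1 p2 m1 m2 f i; have [px mx] := ClB_ex (projT2 x d).
by rewrite -(eqC_vals h1 mx m1) (eqC_vals h2 mx m2).
Qed.

Lemma eqC_refl x y : Defs.eqC x y -> Defs.eqC x x.
Proof.
move=> h; apply: eqC_of; [by case: h|by case: h|].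
move=> d p1 p2 m1 m2 f i; have [py my] := ClB_ex (projT2 y d).
by rewrite (eqC_vals h m1 my) (eqC_vals h m2 my).
Qed.

Lemma eqC_sym x y : Defs.eqC x y -> Defs.eqC y x.
Proof. move=> h; exact: eqC_tr h (eqC_refl h). Qed.

Lemma ClC_ex (X : ClC R a) : exists q, sval X q.
Proof. by case: X => P [x [hx hP]] /=; exists x; apply/hP. Qed.

Lemma ClC_iff (X : ClC R a) x y : sval X x -> (sval X y <-> Defs.eqC x y).
Proof.
case: X => P [x0 [hx hP]] /= /hP h0; split.
- by move/hP => h1; apply: eqC_tr h0 h1.
- by move=> h1; apply/hP; apply: eqC_tr (eqC_sym h0) h1.
Qed.

Lemma ClC_pro (X : ClC R a) q : sval X q -> isProHom (projT2 q).
Proof. by move=> h; have [/(_ h) []] := ClC_iff q h. Qed.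

Lemma ClC_vals (X : ClC R a) q q' : sval X q -> sval X q' -> forall d p p',
  sval (projT2 q d) p -> sval (projT2 q' d) p' -> forall f i, p.2 f i = p'.2 f i.
Proof. move=> h h'; apply: eqC_vals; exact/(ClC_iff q' h). Qed.

Lemma ProVal q d d' p p' : isProHom (projT2 q) -> sval (projT2 q d) p -> sval (projT2 q d') p' ->
  (d <= d')%N -> forall f i, i < d%:Z -> p.2 f i = p'.2 f i.
Proof.
move=> P m m' le f i hi.
have m2 := P d d' p' le m'.
rewrite (ClB_vals m m2 f i) /= /rrf /res (isH_res (ClB_hom m') _ (leqnn _)).
case: ifP => // hw; rewrite (isH_out2 (ClB_hom m')) //.
move/negbT: hw; rewrite /inW negb_and => /orP[]; lia.
Qed.
End ClCl.

Lemma tpow_le (n m : int) (f : int -> R) : m <= n -> tpow n f -> tpow m f.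
Proof. move=> h t i hi; apply: t; lia. Qed.

Lemma LS_tpow (f : LS) : exists a : nat, tpow (-(a%:Z)) (sval f).
Proof. case: f => f [N HN] /=; exists `|N|%N => i hi; apply: HN; lia. Qed.

Section PhiS.
Variable e : EndLaurent R.

Lemma e_ind a a' (q : RawC R a') : (a <= a')%N -> sval (sval e a') q ->
  exists q0 : RawC R a, [/\ sval (sval e a) q0, projT1 q0 = projT1 q &
    forall d p p0, sval (projT2 q d) p -> sval (projT2 q0 d) p0 ->
      eqB a (projT1 q) d p0 (p.1, rrf a p.1 (projT1 q) d p.2)].
Proof. exact: (proj2_sig e a a' q). Qed.

Lemma e_cons1 a1 a2 (q1 : RawC R a1) (q2 : RawC R a2) d1 d2 p1 p2 f i : (a1 <= a2)%N ->
  sval (sval e a1) q1 -> sval (sval e a2) q2 ->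
  sval (projT2 q1 d1) p1 -> sval (projT2 q2 d2) p2 ->
  tpow (-(a1%:Z)) f -> tpow (-(a2%:Z)) f -> i < d1%:Z -> i < d2%:Z ->
  p1.2 f i = p2.2 f i.
Proof.
move=> le m1 m2 n1 n2 t1 t2 h1 h2.
have [q0 [m0 ec H]] := e_ind le m2.
have [p2' n2'] := ClB_ex (projT2 q2 d1).
have [p0 n0] := ClB_ex (projT2 q0 d1).
rewrite (ClC_vals m1 m0 n1 n0).
rewrite (eqB_vals (H d1 p2' p0 n2' n0)) /= /rrf /res.
have -> : p2'.2 (res a1 p2'.1 f) = p2'.2 f.
  apply: (isH_dep (ClB_hom n2')) => j hj; rewrite /res; case: ifP => // hw.
  rewrite t1 //; move/negbT: hw; move: hj; rewrite /inW negb_and => /andP[? ?] /orP[]; lia.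
case: ifP => hw.
- case: (leqP d1 d2) => hd.
  + exact: ProVal (ClC_pro m2) n2' n2 hd f i h1.
  + by symmetry; apply: ProVal (ClC_pro m2) n2 n2' (ltnW hd) f i h2.
- rewrite (isH_out2 (ClB_hom n2)) //.
  move/negbT: hw; rewrite /inW negb_and => /orP[]; lia.
Qed.

Lemma e_cons a1 a2 (q1 : RawC R a1) (q2 : RawC R a2) d1 d2 p1 p2 f i :
  sval (sval e a1) q1 -> sval (sval e a2) q2 ->
  sval (projT2 q1 d1) p1 -> sval (projT2 q2 d2) p2 ->
  tpow (-(a1%:Z)) f -> tpow (-(a2%:Z)) f -> i < d1%:Z -> i < d2%:Z ->
  p1.2 f i = p2.2 f i.
Proof.
move=> m1 m2 n1 n2 t1 t2 h1 h2; case: (leqP a1 a2) => le.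
- exact: e_cons1 le m1 m2 n1 n2 t1 t2 h1 h2.
- by symmetry; apply: e_cons1 (ltnW le) m2 m1 n2 n1 t2 t1 h2 h1.
Qed.

Definition Wit (f : LS) (i : int) (r : R) :=
  exists a (q : RawC R a) d (p : nat * Fn), [/\ sval (sval e a) q, sval (projT2 q d) p,
    tpow (-(a%:Z)) (sval f), i < d%:Z & r = p.2 (sval f) i].
Definition phiv (f : LS) (i : int) : R := epsilon (inhabits (0:R)) (Wit f i).

Lemma phiv_spec a (q : RawC R a) d p (f : LS) i : sval (sval e a) q -> sval (projT2 q d) p ->
  tpow (-(a%:Z)) (sval f) -> i < d%:Z -> phiv f i = p.2 (sval f) i.
Proof.
move=> m n t h.
have : exists r, Wit f i r by exists (p.2 (sval f) i), a, q, d, p.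
move/(epsilon_spec (inhabits 0)); rewrite -/(phiv f i).
case=> a' [q' [d' [p' [m' n' t' h' ->]]]].
exact: e_cons m' m n' n t' t h' h.
Qed.

Lemma phiv_low a (q : RawC R a) (f : LS) i : sval (sval e a) q -> tpow (-(a%:Z)) (sval f) ->
  i < - ((projT1 q)%:Z) -> phiv f i = 0.
Proof.
move=> m t hi; have [p n] := ClB_ex (projT2 q 0).
rewrite (phiv_spec m n t) ?(isH_out2 (ClB_hom n)) //; lia.
Qed.

Lemma phiv_LS (f : LS) : exists N, forall i, i < N -> phiv f i = 0.
Proof.
have [a t] := LS_tpow f; have [q m] := ClC_ex (sval e a).
by exists (-((projT1 q)%:Z)) => i hi; apply: phiv_low m t hi.
Qed.

Definition PhiF (f : LS) : LS := exist _ (phiv f) (phiv_LS f).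

Lemma PhiF_end : [/\ isEndR PhiF, cond1 PhiF & cond2 PhiF].
Proof.
split.
- split.
  + move=> f g h Hs i /=.
    have [a1 t1] := LS_tpow f; have [a2 t2] := LS_tpow g; have [a3 t3] := LS_tpow h.
    pose a := maxn a1 (maxn a2 a3).
    have [q m] := ClC_ex (sval e a).
    have [p n] := ClB_ex (projT2 q `|i|.+1).
    have hi : i < (`|i|.+1)%:Z by lia.
    rewrite (phiv_spec (f:=f) m n _ hi); last by apply: (tpow_le _ t1); lia.
    rewrite (phiv_spec (f:=g) m n _ hi); last by apply: (tpow_le _ t2); lia.
    rewrite (phiv_spec (f:=h) m n _ hi); last by apply: (tpow_le _ t3); lia.
    have -> : sval h = (fun j => sval f j + sval g j) by apply: functional_extensionality.
    by rewrite (proj1 (isH_lin (ClB_hom n))).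
  + move=> f g r Hs i /=.
    have [a1 t1] := LS_tpow f; have [a2 t2] := LS_tpow g.
    pose a := maxn a1 a2.
    have [q m] := ClC_ex (sval e a).
    have [p n] := ClB_ex (projT2 q `|i|.+1).
    have hi : i < (`|i|.+1)%:Z by lia.
    rewrite (phiv_spec (f:=f) m n _ hi); last by apply: (tpow_le _ t1); lia.
    rewrite (phiv_spec (f:=g) m n _ hi); last by apply: (tpow_le _ t2); lia.
    have -> : sval g = (fun j => sval f j * r) by apply: functional_extensionality.
    by rewrite (proj2 (isH_lin (ClB_hom n))).
- move=> n0; have [q m] := ClC_ex (sval e `|n0|%N).
  exists (-((projT1 q)%:Z)) => f t i hi /=.
  by apply: phiv_low m _ hi; apply: (tpow_le _ t); lia.
- move=> m0; have [q m] := ClC_ex (sval e 0%N).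
  have [p n] := ClB_ex (projT2 q `|m0|%N).
  exists (p.1)%:Z => f t i hi /=.
  rewrite (phiv_spec m n); [|by apply: (tpow_le _ t); lia|lia].
  rewrite (isH_dep (ClB_hom n) (f' := fun _ => 0)) ?(isH_zero (ClB_hom n)) //.
  move=> j; rewrite /inW => /andP[_ hj]; exact: t.
Qed.

End PhiS.

Definition Agr (phi : LS -> LS) a d (g : Fn) :=
  forall f : LS, tpow (-(a%:Z)) (sval f) -> forall i, i < d%:Z -> g (sval f) i = sval (phi f) i.

Lemma res_LS a b (f : int -> R) : exists N, forall i, i < N -> res a b f i = 0.
Proof. exists (-(a%:Z)) => i hi; rewrite /res /inW; case: ifP => // /andP[h _]; lia. Qed.
Definition mkLS a b f : LS := exist _ (res a b f) (res_LS a b f).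
Lemma mkLS_tpow a b f : tpow (-(a%:Z)) (sval (mkLS a b f)).
Proof. move=> i hi; rewrite /= /res /inW; case: ifP => // /andP[h _]; lia. Qed.

Lemma LS_subP (f g : LS) : exists N, forall i, i < N -> sval f i - sval g i = 0.
Proof.
have [a t] := LS_tpow f; have [b u] := LS_tpow g.
exists (- ((maxn a b)%:Z)) => i hi; rewrite t ?u ?subr0 //; lia.
Qed.
Definition LSsub (f g : LS) : LS := exist _ _ (LS_subP f g).

Lemma P_unique phi a b1 c1 b2 c2 d (g1 g2 : Fn) : isHomC a b1 c1 d g1 -> isHomC a b2 c2 d g2 ->
  Agr phi a d g1 -> Agr phi a d g2 -> forall f i, g1 f i = g2 f i.
Proof.
move=> H1 H2 A1 A2 f i.
case: (boolP (i < d%:Z)) => hi; last first.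
  by rewrite -leNgt in hi; rewrite (isH_out3 H1) ?(isH_out3 H2).
rewrite -(isH_res H1 f (leq_maxl b1 b2)) -(isH_res H2 f (leq_maxr b1 b2)).
change (g1 (sval (mkLS a (maxn b1 b2) f)) i = g2 (sval (mkLS a (maxn b1 b2) f)) i).
by rewrite A1 ?A2 //; apply: mkLS_tpow.
Qed.

Section PsiS.
Variable phi : EndTop R.
Local Notation ph := (sval phi).

Definition PB a c d (y : nat * Fn) := isHomC a y.1 c d y.2 /\ Agr ph a d y.2.
Definition HcT a c := forall f : LS, tpow (-(a%:Z)) (sval f) -> tpow (-(c%:Z)) (sval (ph f)).

Lemma Agr_ex a c d : HcT a c -> exists b, PB a c d (b, fun f => res c d (sval (ph (mkLS a b f)))).
Proof.
move=> Hc; case: (proj2_sig phi) => [[Ha Hm] c1 c2].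
have [m' Hm'] := c2 (d%:Z); exists `|m'|%N; split.
- split.
  + move=> f f' E /=; congr (res c d (sval (ph _))); apply: LS_ext => j /=.
    by rewrite /res; case: ifP => // /E.
  + by move=> f j hj; rewrite /= /res (negbTE hj).
  + move=> f f' /=; apply: functional_extensionality => j; rewrite /res.
    case: ifP => _; last by rewrite addr0.
    by apply: Ha => j' /=; rewrite res_add.
  + move=> f r /=; apply: functional_extensionality => j; rewrite /res.
    case: ifP => _; last by rewrite mul0r.
    by apply: Hm => j' /=; rewrite res_mul.
- move=> f t i hi /=.
  pose D := LSsub f (mkLS a `|m'|%N (sval f)).
  have E := Ha (mkLS a `|m'|%N (sval f)) D f (fun j => ltac:(by rewrite /= addrC subrK)).
  have Z : sval (ph D) i = 0.
    apply: (Hm' D) hi => j hj; rewrite /= /res; case: ifP => hw; first by rewrite subrr.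
    rewrite t ?subr0 //; move/negbT: hw; rewrite /inW negb_and => /orP[]; lia.
  rewrite /res /=; case hw: (inW c d i); first by rewrite (E i) Z addr0.
  symmetry; apply: (Hc f t i); move/negbT: hw; rewrite /inW negb_and => /orP[]; lia.
Qed.

Lemma ClassB_proof a c d (Hc : HcT a c) :
  exists x, eqB a c d x x /\ forall y, PB a c d y <-> eqB a c d x y.
Proof.
have [b [Hx Ax]] := Agr_ex d Hc.
exists (b, fun f => res c d (sval (ph (mkLS a b f)))); split; first exact: eqB_of.
move=> y; split.
- by move=> [Hy Ay]; exact: (eqB_of Hx Hy (P_unique Hx Hy Ax Ay)).
- move=> E; case: (E) => _ Hy _; split => // f t i hi.
  by rewrite -(eqB_vals E); apply: Ax.
Qed.

Definition ClassB a c d (Hc : HcT a c) : ClB R a c d := exist _ (PB a c d) (ClassB_proof d Hc).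

Definition GoodC a (q : RawC R a) :=
  isProHom (projT2 q) /\ forall d p, sval (projT2 q d) p -> Agr ph a d p.2.

Lemma GoodC_low a (q : RawC R a) : GoodC q -> HcT a (projT1 q).
Proof.
move=> [_ A] f t i hi; have [p n] := ClB_ex (projT2 q 0).
rewrite -(A 0%N p n f t i); [by rewrite (isH_out2 (ClB_hom n)) | lia].
Qed.

Lemma GoodC_eqC a (x y : RawC R a) : GoodC x -> (GoodC y <-> Defs.eqC x y).
Proof.
move=> [Px Ax]; split.
- case=> Py Ay; apply: eqC_of => // d p1 p2 m1 m2.
  exact: P_unique (ClB_hom m1) (ClB_hom m2) (Ax _ _ m1) (Ay _ _ m2).
- move=> E; split; first by case: E.
  move=> d p m f t i hi; have [px mx] := ClB_ex (projT2 x d).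
  by rewrite -(eqC_vals E mx m); exact: (Ax d px mx f t i hi).
Qed.

Definition xC a c (Hc : HcT a c) : RawC R a := existT _ c (fun d => ClassB d Hc).

Lemma GoodC_xC a c (Hc : HcT a c) : GoodC (xC Hc).
Proof.
split.
- move=> d d' p le /= [Hp Ap]; split => /=; first by apply: rrf_hom; exact: isH_lin Hp.
  move=> f t i hi; rewrite /rrf /res (isH_res Hp _ (leqnn _)); case: ifP => hw.
  + apply: (Ap f t i); lia.
  + symmetry; apply: (Hc f t i); move/negbT: hw; rewrite /inW negb_and => /orP[]; lia.
- by move=> d p [_ Ap].
Qed.

Lemma Hc_ex (a : nat) : exists c, HcT a c.
Proof.
case: (proj2_sig phi) => _ c1 _; have [n' Hn] := c1 (-(a%:Z)).
by exists `|n'|%N => f t; apply: (tpow_le _ (Hn f t)); lia.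
Qed.

Lemma ClassC_proof (a : nat) : exists x : RawC R a, Defs.eqC x x /\ forall y : RawC R a, GoodC y <-> Defs.eqC x y.
Proof.
have [c Hc] := Hc_ex a; exists (xC Hc); have G := GoodC_xC Hc.
by split; [exact/(GoodC_eqC _ G) | move=> y; exact: GoodC_eqC G].
Qed.

Definition ClassC (a : nat) : ClC R a := exist _ (@GoodC a) (ClassC_proof a).

Lemma Psi_ind : isIndHom ClassC.
Proof.
move=> a a' q le /= Gq.
have Hc : HcT a (projT1 q).
  by move=> f t; apply: (GoodC_low Gq); apply: (tpow_le _ t); lia.
exists (xC Hc); split => //=; first exact: GoodC_xC.
move=> d p p0 m [H0 A0]; have Hp := ClB_hom m.
have Hr : isHomC a p.1 (projT1 q) d (rrf a p.1 (projT1 q) d p.2).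
  by apply: rrf_hom; exact: isH_lin Hp.
apply: eqB_of => //=; apply: P_unique H0 Hr A0 _.
move=> f t i hi; rewrite /rrf /res.
have -> : p.2 (res a p.1 (sval f)) = p.2 (sval f).
  apply: (isH_dep Hp) => j hj; rewrite /res; case: ifP => // hw.
  rewrite t //; move/negbT: hw; move: hj; rewrite /inW negb_and => /andP[? ?] /orP[]; lia.
case: ifP => hw.
- have t' : tpow (-(a'%:Z)) (sval f) by apply: (tpow_le _ t); lia.
  exact: ((proj2 Gq) d p m f t' i hi).
- symmetry; apply: (Hc f t i); move/negbT: hw; rewrite /inW negb_and => /orP[]; lia.
Qed.

Definition Psi : EndLaurent R := exist _ ClassC Psi_ind.
End PsiS.

Lemma res_in a b (f : int -> R) i : inW a b i -> res a b f i = f i.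
Proof. by rewrite /res => ->. Qed.
Lemma res_out a b (f : int -> R) i : ~~ inW a b i -> res a b f i = 0.
Proof. by rewrite /res => /negbTE ->. Qed.

Lemma lin_comp (g1 g2 : Fn) : lin g1 -> lin g2 -> lin (g1 \o g2).
Proof. by case=> A1 M1 [A2 M2]; split => f f' /=; rewrite ?A2 ?A1 ?M2 ?M1. Qed.
Lemma lin_add (g1 g2 : Fn) : lin g1 -> lin g2 -> lin (fun f i => g1 f i + g2 f i).
Proof.
case=> A1 M1 [A2 M2]; split => f f'; apply: functional_extensionality => j.
- by rewrite A1 A2 addrACA.
- by rewrite M1 M2 mulrDl.
Qed.
Lemma lin_scale (s : k) (g : Fn) : lin g -> lin (fun f i => s *: g f i).
Proof.
case=> A M; split => f f'; apply: functional_extensionality => j.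
- by rewrite A scalerDr.
- by rewrite M scalerAl.
Qed.
Lemma hom_add a b c d (g1 g2 : Fn) : isHomC a b c d g1 -> isHomC a b c d g2 ->
  isHomC a b c d (fun f i => g1 f i + g2 f i).
Proof.
move=> H1 H2; have [A M] := lin_add (isH_lin H1) (isH_lin H2); split => //.
- by move=> f f' E; rewrite (isH_dep H1 E) (isH_dep H2 E).
- by move=> f i hi; rewrite (isH_out H1) // (isH_out H2) // addr0.
Qed.
Lemma hom_scale a b c d s (g : Fn) : isHomC a b c d g -> isHomC a b c d (fun f i => s *: g f i).
Proof.
move=> H; have [A M] := lin_scale s (isH_lin H); split => //.
- by move=> f f' E; rewrite (isH_dep H E).
- by move=> f i hi; rewrite (isH_out H) // scaler0.
Qed.

Lemma Agr_rrf phi a b c d (g : Fn) b' c' : isHomC a b c d g -> (b <= b')%N -> (c <= c')%N ->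
  Agr phi a d g -> Agr phi a d (rrf a b' c' d g).
Proof. move=> H hb hc A f t i hi; rewrite (rrf_same _ _ H) //; exact: A f t i hi. Qed.

Definition PhiE (e : EndLaurent R) : EndTop R := exist _ (PhiF e) (PhiF_end e).

Lemma PhiPsi phi : PhiE (Psi phi) = phi.
Proof.
apply: sig_ext; apply: functional_extensionality => f; apply: LS_ext => i /=.
have [a t] := LS_tpow f.
have [q m] := ClC_ex (sval (Psi phi) a).
have [p n] := ClB_ex (projT2 q `|i|.+1).
have hi : i < (`|i|.+1)%:Z by lia.
rewrite (phiv_spec m n t hi).
have G : GoodC phi q := m.
exact: (proj2 G _ _ n f t i hi).
Qed.

Lemma PsiPhi e : Psi (PhiE e) = e.
Proof.
apply: sig_ext; apply: functional_extensionality_dep => a /=.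
apply: sig_ext; apply: functional_extensionality => y /=; apply: propositional_extensionality.
have [x mx] := ClC_ex (sval e a).
have Gx : GoodC (PhiE e) x.
  split; first exact: ClC_pro mx.
  by move=> d p n f t i hi /=; symmetry; exact: phiv_spec mx n t hi.
apply: iff_trans (GoodC_eqC y Gx) _; apply: iff_sym; exact: ClC_iff y mx.
Qed.

Lemma LS_addP (f g : LS) : exists N, forall i, i < N -> sval f i + sval g i = 0.
Proof.
have [a t] := LS_tpow f; have [b u] := LS_tpow g.
exists (- ((maxn a b)%:Z)) => i hi; rewrite t ?u ?addr0 //; lia.
Qed.
Definition LSadd (f g : LS) : LS := exist _ _ (LS_addP f g).
Lemma LS_scaleP (s : k) (f : LS) : exists N, forall i, i < N -> s *: sval f i = 0.
Proof. have [a t] := LS_tpow f; exists (- (a%:Z)) => i hi; rewrite t ?scaler0 //. Qed.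
Definition LSscale s (f : LS) : LS := exist _ _ (LS_scaleP s f).

Lemma comp_end (p1 p2 : EndTop R) : [/\ isEndR (fun f => sval p1 (sval p2 f)),
  cond1 (fun f => sval p1 (sval p2 f)) & cond2 (fun f => sval p1 (sval p2 f))].
Proof.
case: (proj2_sig p1) => [[A1 M1] c11 c21]; case: (proj2_sig p2) => [[A2 M2] c12 c22].
split; [split|..].
- by move=> f g h H i; apply: A1; exact: A2 H.
- by move=> f g r H i; apply: M1; exact: M2 H.
- move=> n; have [n1 H1] := c12 n; have [n2 H2] := c11 n1.
  by exists n2 => f t; exact: H2 _ (H1 _ t).
- move=> m; have [m1 H1] := c21 m; have [m2 H2] := c22 m1.
  by exists m2 => f t; exact: H1 _ (H2 _ t).
Qed.
Definition Tcomp p1 p2 : EndTop R := exist _ _ (comp_end p1 p2).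

Lemma id_end : [/\ isEndR (fun f : LS => f), cond1 (fun f : LS => f) & cond2 (fun f : LS => f)].
Proof. by split; [split|move=> n; exists n|move=> m; exists m]. Qed.
Definition Tid : EndTop R := exist _ _ id_end.

Lemma add_end (p1 p2 : EndTop R) : [/\ isEndR (fun f => LSadd (sval p1 f) (sval p2 f)),
  cond1 (fun f => LSadd (sval p1 f) (sval p2 f)) & cond2 (fun f => LSadd (sval p1 f) (sval p2 f))].
Proof.
case: (proj2_sig p1) => [[A1 M1] c11 c21]; case: (proj2_sig p2) => [[A2 M2] c12 c22].
split; [split|..].
- by move=> f g h H i /=; rewrite (A1 _ _ _ H) (A2 _ _ _ H) addrACA.
- by move=> f g r H i /=; rewrite (M1 _ _ _ H) (M2 _ _ _ H) mulrDl.
- move=> n; have [n1 H1] := c11 n; have [n2 H2] := c12 n.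
  exists (- ((`|n1|%N + `|n2|%N)%:Z)) => f t i hi /=.
  rewrite H1 ?H2 ?addr0 //; lia.
- move=> m; have [m1 H1] := c21 m; have [m2 H2] := c22 m.
  exists ((`|m1|%N + `|m2|%N)%:Z) => f t i hi /=.
  rewrite H1 ?H2 ?addr0 //; apply: (tpow_le _ t); lia.
Qed.
Definition Tadd p1 p2 : EndTop R := exist _ _ (add_end p1 p2).

Lemma scale_end s (p : EndTop R) : [/\ isEndR (fun f => LSscale s (sval p f)),
  cond1 (fun f => LSscale s (sval p f)) & cond2 (fun f => LSscale s (sval p f))].
Proof.
case: (proj2_sig p) => [[A M] c1 c2].
split; [split|..].
- by move=> f g h H i /=; rewrite (A _ _ _ H) scalerDr.
- by move=> f g r H i /=; rewrite (M _ _ _ H) scalerAl.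
- move=> n; have [n1 H1] := c1 n.
  by exists n1 => f t i hi /=; rewrite H1 ?scaler0.
- move=> m; have [m1 H1] := c2 m.
  by exists m1 => f t i hi /=; rewrite H1 ?scaler0.
Qed.
Definition Tscale s p : EndTop R := exist _ _ (scale_end s p).


Lemma Agr_comp e1 e2 a (q2 : RawC R a) (q1 : RawC R (projT1 q2)) d p1 p2 c3 :
  sval (sval e2 a) q2 -> sval (sval e1 (projT1 q2)) q1 ->
  sval (projT2 q1 d) p1 -> sval (projT2 q2 p1.1) p2 -> (projT1 q1 <= c3)%N ->
  Agr (fun f => PhiF e1 (PhiF e2 f)) a d (rrf a p2.1 c3 d (p1.2 \o p2.2)).
Proof.
move=> m2 m1 n1 n2 hc f t i hi.
have H1 := ClB_hom n1; have H2 := ClB_hom n2.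
change (res c3 d (p1.2 (p2.2 (res a p2.1 (sval f)))) i = phiv e1 (PhiF e2 f) i).
rewrite (isH_res H2 _ (leqnn _)).
have T : tpow (- ((projT1 q2)%:Z)) (sval (PhiF e2 f)).
  by move=> j hj; exact: phiv_low m2 t hj.
have -> : p1.2 (p2.2 (sval f)) = p1.2 (sval (PhiF e2 f)).
  apply: (isH_dep H1) => j /andP[_ hj] /=.
  by symmetry; exact: phiv_spec m2 n2 t hj.
case: (boolP (inW c3 d i)) => hw.
- by rewrite res_in // (phiv_spec m1 n1 T hi).
- rewrite res_out //; symmetry; apply: (phiv_low m1 T).
  by move: hw; rewrite /inW; lia.
Qed.

Lemma comp_ex e1 e2 : IsCompE e1 e2 (Psi (Tcomp (PhiE e1) (PhiE e2))).
Proof.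
move=> a q2 q1 q3 m2 m1 m3.
exists (maxn (projT1 q1) (projT1 q3)); split; rewrite ?leq_maxl ?leq_maxr //.
move=> d p1 p2 p3 n1 n2 n3.
have H1 := ClB_hom n1; have H2 := ClB_hom n2; have H3 := ClB_hom n3.
set c3 := maxn _ _.
have Hc : isHomC a p2.1 c3 d (rrf a p2.1 c3 d (p1.2 \o p2.2)).
  by apply: rrf_hom; exact: lin_comp (isH_lin H1) (isH_lin H2).
have Hr3 : isHomC a p3.1 c3 d (rrf a p3.1 c3 d p3.2) by apply: rrf_hom; exact: isH_lin H3.
have G3 : GoodC (Tcomp (PhiE e1) (PhiE e2)) q3 := m3.
have A3 := Agr_rrf H3 (leqnn _) (leq_maxr _ _ : (projT1 q3 <= c3)%N) (proj2 G3 d p3 n3).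
have A1 := Agr_comp m2 m1 n1 n2 (leq_maxl _ _ : (projT1 q1 <= c3)%N).
apply: eqB_of => //=; exact: P_unique Hc Hr3 A1 A3.
Qed.

Lemma comp_hom e1 e2 e3 : IsCompE e1 e2 e3 ->
  sval (PhiE e3) = sval (PhiE e1) \o sval (PhiE e2).
Proof.
move=> H; apply: functional_extensionality => f; apply: LS_ext => i /=.
have [a t] := LS_tpow f.
have [q2 m2] := ClC_ex (sval e2 a).
have [q1 m1] := ClC_ex (sval e1 (projT1 q2)).
have [q3 m3] := ClC_ex (sval e3 a).
have [c3 [h1 h3 E]] := H a q2 q1 q3 m2 m1 m3.
have hi : i < (`|i|.+1)%:Z by lia.
have [p1 n1] := ClB_ex (projT2 q1 `|i|.+1).
have [p2 n2] := ClB_ex (projT2 q2 p1.1).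
have [p3 n3] := ClB_ex (projT2 q3 `|i|.+1).
have := eqB_vals (E _ _ _ _ n1 n2 n3) (sval f) i => /=.
rewrite (Agr_comp m2 m1 n1 n2 h1 t hi) (rrf_same _ _ (ClB_hom n3)) //.
by rewrite -(phiv_spec m3 n3 t hi) => /= ->.
Qed.

Lemma Agr_id a c3 d : (a <= c3)%N -> Agr (fun f => f) a d (rrf a d c3 d id).
Proof.
move=> h f t i hi; rewrite /rrf /=.
case: (boolP (inW c3 d i)) => hw; last first.
  by rewrite res_out // t //; move: hw; rewrite /inW; lia.
rewrite res_in //; case: (boolP (inW a d i)) => hw'; first by rewrite res_in.
by rewrite res_out // t //; move: hw'; rewrite /inW; lia.
Qed.

Lemma id_ex : IsIdE (Psi Tid).
Proof.
move=> a q m; exists (maxn a (projT1 q)); split; rewrite ?leq_maxl ?leq_maxr //.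
move=> d p n; have Hp := ClB_hom n.
set c3 := maxn _ _.
have Hi : isHomC a d c3 d (@rrf k R a d c3 d id) by apply: (rrf_hom a d c3 d); split.
have Hr : isHomC a p.1 c3 d (rrf a p.1 c3 d p.2) by apply: rrf_hom; exact: isH_lin Hp.
have G : GoodC Tid q := m.
have A := Agr_rrf Hp (leqnn _) (leq_maxr _ _ : (projT1 q <= c3)%N) (proj2 G d p n).
have A0 := Agr_id (d:=d) (leq_maxl _ _ : (a <= c3)%N).
apply: eqB_of => //=; exact: P_unique Hi Hr A0 A.
Qed.

Lemma id_hom e : IsIdE e -> sval (PhiE e) = id.
Proof.
move=> H; apply: functional_extensionality => f; apply: LS_ext => i /=.
have [a t] := LS_tpow f.
have [q m] := ClC_ex (sval e a).
have [c3 [h1 h2 E]] := H a q m.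
have hi : i < (`|i|.+1)%:Z by lia.
have [p n] := ClB_ex (projT2 q `|i|.+1).
have := eqB_vals (E _ _ n) (sval f) i => /=.
rewrite (Agr_id (d:=`|i|.+1) h1 t hi) (rrf_same _ _ (ClB_hom n)) //.
by rewrite -(phiv_spec m n t hi) => /= ->.
Qed.

Lemma add_ex e1 e2 : IsAddE e1 e2 (Psi (Tadd (PhiE e1) (PhiE e2))).
Proof.
move=> a q1 q2 q3 m1 m2 m3.
exists (maxn (projT1 q1) (maxn (projT1 q2) (projT1 q3))).
split; [lia|lia|lia|].
move=> d p1 p2 p3 n1 n2 n3.
have H1 := ClB_hom n1; have H2 := ClB_hom n2; have H3 := ClB_hom n3.
set c3 := maxn (projT1 q1) (maxn (projT1 q2) (projT1 q3)).
set B := maxn p1.1 p2.1.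
have l1 : (projT1 q1 <= c3)%N by rewrite /c3; lia.
have l2 : (projT1 q2 <= c3)%N by rewrite /c3; lia.
have l3 : (projT1 q3 <= c3)%N by rewrite /c3; lia.
have HS : isHomC a B c3 d (fun f i => rrf a B c3 d p1.2 f i + rrf a B c3 d p2.2 f i).
  apply: hom_add; apply: rrf_hom; [exact: isH_lin H1|exact: isH_lin H2].
have Hr3 : isHomC a p3.1 c3 d (rrf a p3.1 c3 d p3.2) by apply: rrf_hom; exact: isH_lin H3.
have G3 : GoodC (Tadd (PhiE e1) (PhiE e2)) q3 := m3.
have A3 := Agr_rrf H3 (leqnn _) l3 (proj2 G3 d p3 n3).
have AS : Agr (fun f => LSadd (PhiF e1 f) (PhiF e2 f)) a d
    (fun f i => rrf a B c3 d p1.2 f i + rrf a B c3 d p2.2 f i).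
  move=> f t i hi /=.
  rewrite (rrf_same _ _ H1) ?leq_maxl // (rrf_same _ _ H2) ?leq_maxr //.
  by rewrite (phiv_spec m1 n1 t hi) (phiv_spec m2 n2 t hi).
apply: eqB_of => //=; exact: P_unique HS Hr3 AS A3.
Qed.

Lemma add_hom e1 e2 e3 : IsAddE e1 e2 e3 -> forall f i,
  sval (sval (PhiE e3) f) i = sval (sval (PhiE e1) f) i + sval (sval (PhiE e2) f) i.
Proof.
move=> H f i /=.
have [a t] := LS_tpow f.
have [q1 m1] := ClC_ex (sval e1 a).
have [q2 m2] := ClC_ex (sval e2 a).
have [q3 m3] := ClC_ex (sval e3 a).
have [c3 [h1 h2 h3 E]] := H a q1 q2 q3 m1 m2 m3.
have hi : i < (`|i|.+1)%:Z by lia.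
have [p1 n1] := ClB_ex (projT2 q1 `|i|.+1).
have [p2 n2] := ClB_ex (projT2 q2 `|i|.+1).
have [p3 n3] := ClB_ex (projT2 q3 `|i|.+1).
have := eqB_vals (E _ _ _ _ n1 n2 n3) (sval f) i => /=.
rewrite (rrf_same _ _ (ClB_hom n1)) ?leq_maxl //.
rewrite (rrf_same _ _ (ClB_hom n2)) ?leq_maxr //.
rewrite (rrf_same _ _ (ClB_hom n3)) //.
by rewrite -(phiv_spec m1 n1 t hi) -(phiv_spec m2 n2 t hi) -(phiv_spec m3 n3 t hi) => /= ->.
Qed.

Lemma scale_ex s e1 : IsScaleE s e1 (Psi (Tscale s (PhiE e1))).
Proof.
move=> a q1 q2 m1 m2.
exists (maxn (projT1 q1) (projT1 q2)); split; rewrite ?leq_maxl ?leq_maxr //.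
move=> d p1 p2 n1 n2.
have H1 := ClB_hom n1; have H2 := ClB_hom n2.
set c3 := maxn _ _.
have HS : isHomC a p1.1 c3 d (fun f i => s *: rrf a p1.1 c3 d p1.2 f i).
  apply: hom_scale; apply: rrf_hom; exact: isH_lin H1.
have Hr2 : isHomC a p2.1 c3 d (rrf a p2.1 c3 d p2.2) by apply: rrf_hom; exact: isH_lin H2.
have G2 : GoodC (Tscale s (PhiE e1)) q2 := m2.
have A2 := Agr_rrf H2 (leqnn _) (leq_maxr _ _ : (projT1 q2 <= c3)%N) (proj2 G2 d p2 n2).
have AS : Agr (fun f => LSscale s (PhiF e1 f)) a d (fun f i => s *: rrf a p1.1 c3 d p1.2 f i).
  move=> f t i hi /=.
  by rewrite (rrf_same _ _ H1) ?leq_maxl // (phiv_spec m1 n1 t hi).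
apply: eqB_of => //=; exact: P_unique HS Hr2 AS A2.
Qed.

Lemma scale_hom s e1 e2 : IsScaleE s e1 e2 -> forall f i,
  sval (sval (PhiE e2) f) i = s *: sval (sval (PhiE e1) f) i.
Proof.
move=> H f i /=.
have [a t] := LS_tpow f.
have [q1 m1] := ClC_ex (sval e1 a).
have [q2 m2] := ClC_ex (sval e2 a).
have [c3 [h1 h2 E]] := H a q1 q2 m1 m2.
have hi : i < (`|i|.+1)%:Z by lia.
have [p1 n1] := ClB_ex (projT2 q1 `|i|.+1).
have [p2 n2] := ClB_ex (projT2 q2 `|i|.+1).
have := eqB_vals (E _ _ _ n1 n2) (sval f) i => /=.
rewrite (rrf_same _ _ (ClB_hom n1)) // (rrf_same _ _ (ClB_hom n2)) //.
by rewrite -(phiv_spec m1 n1 t hi) -(phiv_spec m2 n2 t hi) => /= ->.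
Qed.

End Pf.

Unset Implicit Arguments.

Theorem proposition2p4 (k : fieldType) (R : algType k) :
  (* the algebra operations on E(R) are everywhere defined *)
  [/\ (forall e1 e2 : EndLaurent R, exists e3, IsCompE e1 e2 e3),
      (exists e : EndLaurent R, IsIdE e),
      (forall e1 e2 : EndLaurent R, exists e3, IsAddE e1 e2 e3) &
      (forall (s : k) (e1 : EndLaurent R), exists e2, IsScaleE s e1 e2)] /\
  (* and the canonical map E(R) -> EndTop R is an algebra isomorphism *)
  exists Phi : EndLaurent R -> EndTop R,
    [/\ bijective Phi,
        (forall e, Canon e (sval (Phi e))) &
     [/\ (forall e1 e2 e3, IsCompE e1 e2 e3 ->
           sval (Phi e3) = sval (Phi e1) \o sval (Phi e2)),
        (forall e, IsIdE e -> sval (Phi e) = id),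
        (forall e1 e2 e3, IsAddE e1 e2 e3 -> forall f i,
           sval (sval (Phi e3) f) i
             = sval (sval (Phi e1) f) i + sval (sval (Phi e2) f) i) &
        (forall s e1 e2, IsScaleE s e1 e2 -> forall f i,
           sval (sval (Phi e2) f) i = s *: sval (sval (Phi e1) f) i)]].
Proof.
split.
  split.
  - move=> e1 e2; exists (Psi (Tcomp (PhiE e1) (PhiE e2))); exact: comp_ex.
  - exists (Psi (@Tid _ R)); exact: id_ex.
  - move=> e1 e2; exists (Psi (Tadd (PhiE e1) (PhiE e2))); exact: add_ex.
  - move=> s e1; exists (Psi (Tscale s (PhiE e1))); exact: scale_ex.
exists (@PhiE _ R); split.
- exists (@Psi _ R); [move=> e; exact: PsiPhi | move=> phi; exact: PhiPsi].
- move=> e a q m d p n f t; split.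
  + move=> i hi; exact: phiv_low m t hi.
  + move=> i /andP[_ hi]; exact: phiv_spec m n t hi.
- split; [exact: comp_hom | exact: id_hom | exact: add_hom | exact: scale_hom].
Qed.
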